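(* Let $f\in\mathcal N(J)^\perp$ and let $(f_n)$ be generated by the scheme (S) (no spectral-case assumption). Then $(f_n)$ is bounded by $\|f\|$ and admits a subsequence $(f_{n_k})$ converging weakly in $\mathcal H$ to some $g\in\mathcal H$.
   Context: Let $\mathcal H$ be a real Hilbert space and $J:\mathcal H\to\mathbb R\cup\{+\infty\}$ a proper, convex, lower semicontinuous, absolutely one-homogeneous functional ($J(\alpha u)=|\alpha|J(u)$). Let $\mathcal N(J)=\{u: J(u)=0\}$ be its null-space, and assume the Poincaré-type inequality: there is $C>0$ with $\|u\|\le C J(u)$ for all $u\in\mathcal N(J)^\perp$. $\partial J$ denotes the convex subdifferential. Gradient flow: for $g\in\mathcal H$, the gradient flow of $J$ with datum $g$ is the solution $u$ of $u'(t)=-p(t)$, $p(t)\in\partial J(u(t))$, $u(0)=g$, where $p(t)$ is the element of minimal norm in $\partial J(u(t))$. For $g\in\mathcal N(J)^\perp\setminus\{0\}$ the flow extinguishes at a finite time $T>0$. An extinction profile of $g$ is any element $p^*=\lim_{k\to\infty}\frac{1}{T-t_k}\int_{t_k}^T p(s)\,ds$ for some increasing sequence $t_k\to T$ along which the limit exists; it is known that such $p^*$ exists, $p^*\neq 0$ and $p^*\in\partial J(p^* )$. Scheme (S): given $f\in\mathcal N(J)^\perp$, set $f_0=f$ and for $n\ge0$ let $p_n^*$ be an extinction profile of $f_n$, $c_n=\langle f_n,p_n^*\rangle/\|p_n^*\|^2$, and $f_{n+1}=f_n-c_np_n^*$. (If some $f_n=0$, the scheme is stopped and we set $f_m=0$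 for $m\ge n$.) *)

(* Defs.v *)
From Stdlib Require Import Reals Lra.
Open Scope R_scope.

Record Hilbert : Type := {
  hcar :> Type;
  hzero : hcar;
  hadd : hcar -> hcar -> hcar;
  hopp : hcar -> hcar;
  hscal : R -> hcar -> hcar;
  hinner : hcar -> hcar -> R;
  hadd_assoc : forall x y z, hadd x (hadd y z) = hadd (hadd x y) z;
  hadd_comm : forall x y, hadd x y = hadd y x;
  hadd_0 : forall x, hadd x hzero = x;
  hadd_opp : forall x, hadd x (hopp x) = hzero;
  hscal_1 : forall x, hscal 1 x = x;
  hscal_assoc : forall a b x, hscal a (hscal b x) = hscal (a * b) x;
  hscal_distr_l : forall a x y, hscal a (hadd x y) = hadd (hscal a x) (hscal a y);
  hscal_distr_r : forall a b x, hscal (a + b) x = hadd (hscal a x) (hscal b x);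
  hinner_sym : forall x y, hinner x y = hinner y x;
  hinner_add_l : forall x y z, hinner (hadd x y) z = hinner x z + hinner y z;
  hinner_scal_l : forall a x y, hinner (hscal a x) y = a * hinner x y;
  hinner_pos : forall x, 0 <= hinner x x;
  hinner_def : forall x, hinner x x = 0 -> x = hzero;
  hcomplete : forall u : nat -> hcar,
    (forall eps, eps > 0 -> exists N, forall m n, (m >= N)%nat -> (n >= N)%nat ->
        sqrt (hinner (hadd (u m) (hopp (u n))) (hadd (u m) (hopp (u n)))) < eps) ->
    exists l, forall eps, eps > 0 -> exists N, forall n, (n >= N)%nat ->
        sqrt (hinner (hadd (u n) (hopp l)) (hadd (u n) (hopp l))) < eps
}.

Arguments hzero {h}.
Arguments hadd {h}.
Arguments hopp {h}.
Arguments hscal {h}.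
Arguments hinner {h}.

Definition hsub {H : Hilbert} (x y : H) : H := hadd x (hopp y).
Definition hnorm {H : Hilbert} (x : H) : R := sqrt (hinner x x).

Definition hconv {H : Hilbert} (u : nat -> H) (l : H) : Prop :=
  forall eps, eps > 0 -> exists N, forall n, (n >= N)%nat -> hnorm (hsub (u n) l) < eps.

Definition hweak_conv {H : Hilbert} (u : nat -> H) (l : H) : Prop :=
  forall v : H, Un_cv (fun n => hinner (u n) v) (hinner l v).

(* ---------- Functionals with values in R ∪ {+oo} (None = +oo) ---------- *)
Definition functional (H : Hilbert) := H -> option R.

Definition proper {H : Hilbert} (J : functional H) : Prop :=
  exists u, J u <> None.

Definition convex {H : Hilbert} (J : functional H) : Prop :=
  forall (u v : H) (a b l : R), J u = Some a -> J v = Some b -> 0 <= l <= 1 ->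
    exists c, J (hadd (hscal l u) (hscal (1 - l) v)) = Some c /\
              c <= l * a + (1 - l) * b.

Definition lsc {H : Hilbert} (J : functional H) : Prop :=
  forall (r : R) (u : nat -> H) (l : H),
    hconv u l ->
    (forall k, exists a, J (u k) = Some a /\ a <= r) ->
    exists a, J l = Some a /\ a <= r.

(* absolute one-homogeneity J(alpha u) = |alpha| J(u)  (alpha <> 0; the case
   alpha = 0 i.e. J(0)=0 follows from the other assumptions) *)
Definition abs_one_homogeneous {H : Hilbert} (J : functional H) : Prop :=
  forall (alpha : R) (u : H), alpha <> 0 ->
    J (hscal alpha u) = option_map (fun x => Rabs alpha * x) (J u).

Definition nullspace {H : Hilbert} (J : functional H) (u : H) : Prop :=
  J u = Some 0.

Definition in_null_perp {H : Hilbert} (J : functional H) (u : H) : Prop :=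
  forall w, nullspace J w -> hinner u w = 0.

Definition poincare {H : Hilbert} (J : functional H) : Prop :=
  exists C, C > 0 /\
    forall u a, in_null_perp J u -> J u = Some a -> hnorm u <= C * a.

Definition subdiff {H : Hilbert} (J : functional H) (u p : H) : Prop :=
  exists a, J u = Some a /\
    forall v b, J v = Some b -> a + hinner p (hsub v u) <= b.

Definition min_norm_subgrad {H : Hilbert} (J : functional H) (u p : H) : Prop :=
  subdiff J u p /\ forall q, subdiff J u q -> hnorm p <= hnorm q.

(* u : [0,oo) -> H (values at negative times irrelevant), u(0) = g,
   u continuous on [0,oo), and for every t > 0 the right derivative of u at t
   exists and equals -p(t), with p(t) the minimal-norm element of dJ(u(t))
   (Brezis' strong solution of u' = -dJ(u) with the "lazy" selection). *)
Definition gradient_flow {H : Hilbert} (J : functional H) (g : H)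
    (u p : R -> H) : Prop :=
  u 0 = g /\
  (forall t, 0 <= t -> forall eps, eps > 0 -> exists delta, delta > 0 /\
      forall s, 0 <= s -> Rabs (s - t) < delta -> hnorm (hsub (u s) (u t)) < eps) /\
  (forall t, t > 0 -> min_norm_subgrad J (u t) (p t)) /\
  (forall t, t > 0 -> forall eps, eps > 0 -> exists delta, delta > 0 /\
      forall h, 0 < h < delta ->
        hnorm (hadd (hscal (/ h) (hsub (u (t + h)) (u t))) (p t)) <= eps).

(* (weak / Pettis-Riemann) integral of an H-valued function over [a,b]:
   w = \int_a^b p(s) ds  iff  <w,v> = \int_a^b <p(s),v> ds for all v.
   For the gradient flow this coincides with the Bochner integral. *)
Definition is_integral {H : Hilbert} (p : R -> H) (a b : R) (w : H) : Prop :=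
  forall v : H, exists pr : Riemann_integrable (fun s => hinner (p s) v) a b,
    RiemannInt pr = hinner w v.

Definition extinction_time {H : Hilbert} (u : R -> H) (T : R) : Prop :=
  T > 0 /\ (forall t, T <= t -> u t = hzero) /\
  (forall t, 0 <= t < T -> u t <> hzero).

Definition extinction_profile {H : Hilbert} (J : functional H) (g pstar : H) : Prop :=
  exists (u p : R -> H) (T : R) (tk : nat -> R) (I : nat -> H),
    gradient_flow J g u p /\ extinction_time u T /\
    (forall k, 0 < tk k < T) /\
    (forall k, tk k < tk (S k)) /\
    Un_cv tk T /\
    (forall k, is_integral p (tk k) T (I k)) /\
    hconv (fun k => hscal (/ (T - tk k)) (I k)) pstar.

Definition scheme_S {H : Hilbert} (J : functional H) (f : H)
    (fs ps : nat -> H) : Prop :=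
  fs 0%nat = f /\
  (forall n, fs n = hzero -> fs (S n) = hzero) /\
  (forall n, fs n <> hzero ->
     extinction_profile J (fs n) (ps n) /\
     fs (S n) = hsub (fs n)
        (hscal (hinner (fs n) (ps n) / (hnorm (ps n) ^ 2)) (ps n))).

(* Main.v *)
Require Import Defs.
From Stdlib Require Import Reals Lra Lia ClassicalEpsilon Classical.
Open Scope R_scope.

Section Basics.
Variable H : Hilbert.
Implicit Types x y z : H.

Lemma ip0l y : hinner (@hzero H) y = 0.
Proof.
  assert (E := hinner_add_l H hzero hzero y). rewrite hadd_0 in E. lra.
Qed.
Lemma ipoppl x y : hinner (hopp x) y = - hinner x y.
Proof.
  assert (E := hinner_add_l H x (hopp x) y). rewrite hadd_opp, ip0l in E. lra.
Qed.
Lemma ipaddl x y z : hinner (hadd x y) z = hinner x z + hinner y z.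
Proof. apply hinner_add_l. Qed.
Lemma ipscall a x y : hinner (hscal a x) y = a * hinner x y.
Proof. apply hinner_scal_l. Qed.
Lemma ipsubl x y z : hinner (hsub x y) z = hinner x z - hinner y z.
Proof. unfold hsub. rewrite ipaddl, ipoppl. ring. Qed.
Lemma ip0r y : hinner y (@hzero H) = 0.
Proof. rewrite hinner_sym; apply ip0l. Qed.
Lemma ipoppr x y : hinner y (hopp x) = - hinner y x.
Proof. rewrite !(hinner_sym _ y); apply ipoppl. Qed.
Lemma ipaddr x y z : hinner z (hadd x y) = hinner z x + hinner z y.
Proof. rewrite !(hinner_sym _ z); apply ipaddl. Qed.
Lemma ipscalr a x y : hinner y (hscal a x) = a * hinner y x.
Proof. rewrite !(hinner_sym _ y); apply ipscall. Qed.
Lemma ipsubr x y z : hinner z (hsub x y) = hinner z x - hinner z y.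
Proof. rewrite !(hinner_sym _ z); apply ipsubl. Qed.

Lemma hnorm_sq x : hnorm x ^ 2 = hinner x x.
Proof. unfold hnorm. apply pow2_sqrt, hinner_pos. Qed.
Lemma hnorm_pos x : 0 <= hnorm x.
Proof. unfold hnorm. apply sqrt_pos. Qed.

Lemma CS_sq x y : (hinner x y)^2 <= hinner x x * hinner y y.
Proof.
  destruct (Req_dec (hinner y y) 0) as [E|E].
  - apply hinner_def in E. subst y. rewrite !ip0r. pose proof (hinner_pos _ x). nra.
  - assert (Hc : 0 < hinner y y) by (pose proof (hinner_pos _ y); lra).
    set (t := hinner x y / hinner y y).
    assert (P := hinner_pos _ (hsub x (hscal t y))).
    rewrite ipsubl, !ipsubr, !ipscall, !ipscalr in P.
    rewrite (hinner_sym _ y x) in P.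
    idtac.
    assert (Hq : hinner x x - 2 * t * hinner x y + t * t * hinner y y >= 0) by nra.
    assert (Ht : t * hinner y y = hinner x y) by (unfold t; field; lra).
    assert (hinner y y * (hinner x x - 2 * t * hinner x y + t * t * hinner y y) >= 0) by nra.
    replace (hinner y y * (hinner x x - 2 * t * hinner x y + t * t * hinner y y))
      with (hinner y y * hinner x x - 2 * t * hinner y y * hinner x y + (t * hinner y y) * (t * hinner y y)) in H0 by ring.
    rewrite Ht in H0. nra.
Qed.

Lemma CS x y : Rabs (hinner x y) <= hnorm x * hnorm y.
Proof.
  unfold hnorm. rewrite <- sqrt_mult by apply hinner_pos.
  rewrite <- sqrt_Rsqr_abs. apply sqrt_le_1_alt. unfold Rsqr.
  pose proof (CS_sq x y). simpl in H0. lra.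
Qed.

End Basics.

Lemma small_N eps : eps > 0 -> exists N, forall n, (n >= N)%nat -> / INR (S n) < eps.
Proof.
  intros He. destruct (archimed_cor1 eps He) as [N [HN HN0]].
  exists N. intros n Hn. eapply Rle_lt_trans; [|exact HN].
  apply Rinv_le_contravar. apply lt_0_INR; lia. apply le_INR; lia.
Qed.

Lemma lim_bound u l M : Un_cv u l -> (forall n, Rabs (u n) <= M) -> Rabs l <= M.
Proof.
  intros Hu Hb. destruct (Rle_or_lt (Rabs l) M) as [|Hlt]; auto.
  destruct (Hu (Rabs l - M)) as [N HN]; [lra|].
  specialize (HN N (le_n _)). unfold R_dist in HN. specialize (Hb N).
  pose proof (Rabs_triang_inv l (u N)). rewrite Rabs_minus_sym in HN. lra.
Qed.

Lemma cv_scal u l t : Un_cv u l -> Un_cv (fun n => t * u n) (t * l).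
Proof.
  intros Hu. apply (CV_mult (fun _ => t) u). 2: exact Hu.
  intros e He. exists 0%nat. intros. unfold R_dist. rewrite Rminus_diag, Rabs_R0. lra.
Qed.

Lemma lim_ge0 h hs : Un_cv hs h -> (forall j, hs j > - / INR (S j)) -> 0 <= h.
Proof.
  intros Hc Hb. destruct (Rle_or_lt 0 h) as [|Hn]; auto. exfalso.
  destruct (Hc (- h / 2)) as [N1 HN1]; [lra|].
  destruct (small_N (- h / 2)) as [N2 HN2]; [lra|].
  specialize (HN1 (max N1 N2) ltac:(lia)). specialize (HN2 (max N1 N2) ltac:(lia)).
  specialize (Hb (max N1 N2)). unfold R_dist in HN1. apply Rabs_def2 in HN1. lra.
Qed.

Lemma step_norm (H : Hilbert) (x p : H) :
  hinner (hsub x (hscal (hinner x p / (hnorm p ^ 2)) p)) (hsub x (hscal (hinner x p / (hnorm p ^ 2)) p)) <= hinner x x.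
Proof.
  rewrite hnorm_sq.
  set (c := hinner x p / hinner p p).
  rewrite ipsubl, !ipsubr, !ipscall, !ipscalr. rewrite (hinner_sym _ p x).
  destruct (Req_dec (hinner p p) 0) as [E|E].
  - apply hinner_def in E as E'. subst p. rewrite !ip0r. lra.
  - assert (Hc : 0 < hinner p p) by (pose proof (hinner_pos _ p); lra).
    assert (Ht : c * hinner p p = hinner x p) by (unfold c; field; lra).
    assert (c * (c * hinner p p) = c * hinner x p) by (rewrite Ht; auto).
    assert (0 <= c * hinner x p) by (rewrite <- Ht; nra).
    nra.
Qed.

Fixpoint build (nxt : nat -> nat -> nat) (k : nat) : nat :=
  match k with 0 => nxt 0%nat 0%nat | S k' => nxt (S (build nxt k')) (S k') end.

Lemma BW_sub (u : nat -> R) M : (forall n, Rabs (u n) <= M) ->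
  exists phi : nat -> nat, (forall k, (phi k < phi (S k))%nat) /\
    exists l, Un_cv (fun k => u (phi k)) l.
Proof.
  intros Hb.
  destruct (Bolzano_Weierstrass u (fun c => -M <= c <= M) (compact_P3 _ _)) as [l Hl].
  { intros n. specialize (Hb n). pose proof (Rle_abs (u n)). pose proof (Rle_abs (- u n)).
    rewrite Rabs_Ropp in H0. lra. }
  assert (Ex : forall N k, exists p, (N <= p)%nat /\ Rabs (u p - l) < / INR (S k)).
  { intros N k.
    assert (Hp : 0 < / INR (S k)) by (apply Rinv_0_lt_compat, lt_0_INR; lia).
    destruct (Hl (fun y => Rabs (y - l) < / INR (S k)) N) as [p Hp'].
    - exists (mkposreal _ Hp). intros y Hy. exact Hy.
    - exists p; exact Hp'. }
  set (nxt := fun N k => epsilon (inhabits 0%nat)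
     (fun p => (N <= p)%nat /\ Rabs (u p - l) < / INR (S k))).
  assert (Hn : forall N k, (N <= nxt N k)%nat /\ Rabs (u (nxt N k) - l) < / INR (S k)).
  { intros N k. unfold nxt. apply epsilon_spec, Ex. }
  exists (build nxt). split.
  - intros k. simpl. destruct (Hn (S (build nxt k)) (S k)). lia.
  - exists l. intros e He. destruct (small_N e He) as [N HN]. exists N.
    intros k Hk. unfold R_dist.
    assert (Rabs (u (build nxt k) - l) < / INR (S k)).
    { destruct k; simpl; apply Hn. }
    specialize (HN k Hk). lra.
Qed.

Lemma cv_const c : Un_cv (fun _ => c) c.
Proof. intros e He. exists 0%nat. intros. unfold R_dist. rewrite Rminus_diag, Rabs_R0. lra. Qed.

Lemma cv_affine u l a b : Un_cv u l -> Un_cv (fun n => a * u n + b) (a * l + b).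
Proof. intros Hu. apply (CV_plus _ (fun _ => b)). apply cv_scal, Hu. apply cv_const. Qed.

Lemma conv_inner (H : Hilbert) (z : nat -> H) g x :
  hconv z g -> Un_cv (fun j => hinner (z j) x) (hinner g x).
Proof.
  intros Hc e He. pose proof (hnorm_pos _ x) as Hx.
  destruct (Hc (e / (hnorm x + 1))) as [N HN].
  { apply Rdiv_lt_0_compat; lra. }
  exists N. intros n Hn. unfold R_dist. specialize (HN n Hn).
  rewrite <- ipsubl. eapply Rle_lt_trans. apply CS.
  pose proof (hnorm_pos _ (hsub (z n) g)).
  assert (e / (hnorm x + 1) * (hnorm x + 1) = e) by (field; lra).
  assert (hnorm (hsub (z n) g) * hnorm x <= e / (hnorm x + 1) * hnorm x) by nra.
  nra.
Qed.

Lemma rep (H : Hilbert) (S : H -> Prop) (L : H -> R) (B : R) :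
  S hzero -> (forall a b, S a -> S b -> S (hadd a b)) -> (forall t a, S a -> S (hscal t a)) ->
  (forall a b, S a -> S b -> L (hadd a b) = L a + L b) ->
  (forall t a, S a -> L (hscal t a) = t * L a) ->
  (forall a, S a -> Rabs (L a) <= B * hnorm a) ->
  exists g (z : nat -> H), (forall j, S (z j)) /\ hconv z g /\
     forall v, S v -> hinner g v = L v.
Proof.
  intros S0 Sadd Sscal Ladd Lscal Lb.
  set (Phi := fun z => hinner z z / 2 - L z).
  assert (Plow : forall z, S z -> - (B * B / 2) <= Phi z).
  { intros z Sz. unfold Phi. rewrite <- hnorm_sq. specialize (Lb z Sz).
    pose proof (Rle_abs (L z)). pose proof (Rle_0_sqr (hnorm z - B)). unfold Rsqr in *. simpl. nra. }
  set (E := fun r => exists z, S z /\ r = - Phi z).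
  destruct (completeness E) as [Ms [HMu HMl]].
  { exists (B * B / 2). intros r [z [Sz ->]]. specialize (Plow z Sz). lra. }
  { exists (- Phi hzero). exists hzero. auto. }
  set (m := - Ms).
  assert (F1 : forall z, S z -> m <= Phi z).
  { intros z Sz. assert (E (- Phi z)) by (exists z; auto). specialize (HMu _ H0). unfold m. lra. }
  assert (F2 : forall j, exists z, S z /\ Phi z < m + / INR (Datatypes.S j)).
  { intros j. apply NNPP. intros Hn.
    assert (Hp : 0 < / INR (Datatypes.S j)) by (apply Rinv_0_lt_compat, lt_0_INR; lia).
    assert (is_upper_bound E (Ms - / INR (Datatypes.S j))).
    { intros r [z [Sz ->]]. destruct (Rle_or_lt (- Phi z) (Ms - / INR (Datatypes.S j))) as [|Hl]; auto.
      exfalso. apply Hn. exists z. split; auto. unfold m. lra. }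
    specialize (HMl _ H0). lra. }
  set (z := fun j => epsilon (inhabits hzero) (fun z => S z /\ Phi z < m + / INR (Datatypes.S j))).
  assert (Hz : forall j, S (z j) /\ Phi (z j) < m + / INR (Datatypes.S j)).
  { intros j. unfold z. apply epsilon_spec, F2. }
  assert (Par : forall a b, S a -> S b -> hinner (hsub a b) (hsub a b) <= 4 * (Phi a + Phi b) - 8 * m).
  { intros a b Sa Sb.
    assert (Sm : S (hscal (/2) (hadd a b))) by auto.
    specialize (F1 _ Sm). unfold Phi in *.
    rewrite Lscal, Ladd in F1 by auto.
    rewrite ipscall, !ipscalr, !ipaddl, !ipaddr in F1.
    rewrite ipsubl, !ipsubr. rewrite (hinner_sym _ b a) in *. lra. }
  destruct (hcomplete H z) as [g Hg].
  { intros e He. destruct (small_N (e * e / 8)) as [N HN]. { nra. }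
    exists N. intros i k Hi Hk.
    change (hadd (z i) (hopp (z k))) with (hsub (z i) (z k)).
    assert (HP := Par (z i) (z k) (proj1 (Hz i)) (proj1 (Hz k))).
    pose proof (HN i Hi). pose proof (HN k Hk). pose proof (Hz i). pose proof (Hz k).
    rewrite <- (sqrt_Rsqr e) by lra. apply sqrt_lt_1_alt. split. apply hinner_pos.
    unfold Rsqr. lra. }
  assert (Hconv : hconv z g) by exact Hg.
  exists g, z. split; [intros j; apply Hz|]. split; [exact Hconv|].
  intros v Sv.
  assert (Hopt : forall t, 0 <= t * (hinner g v - L v) + t * t * hinner v v / 2).
  { intros t.
    apply (lim_ge0 _ (fun j => t * (hinner (z j) v - L v) + t * t * hinner v v / 2)).
    - replace (t * (hinner g v - L v) + t * t * hinner v v / 2) with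
        (t * hinner g v + (- t * L v + t * t * hinner v v / 2)) by ring.
      eapply Un_cv_ext. 2: apply cv_affine, conv_inner, Hconv.
      intros n. simpl. ring.
    - intros j. destruct (Hz j) as [Sj Pj].
      assert (Sjt : S (hadd (z j) (hscal t v))) by auto.
      specialize (F1 _ Sjt). unfold Phi in *.
      rewrite Ladd, Lscal in F1 by auto.
      rewrite !ipaddl, !ipaddr, !ipscall, !ipscalr in F1.
      rewrite (hinner_sym _ v (z j)) in F1. lra. }
  set (d := hinner g v - L v) in *. set (q := hinner v v) in *.
  assert (Hq : 0 <= q) by apply hinner_pos.
  specialize (Hopt (- d / (q + 1))).
  assert (Hm : 0 <= 2 * (q + 1) * (q + 1) * (- d / (q + 1) * d + - d / (q + 1) * (- d / (q + 1)) * q / 2)) by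
    (apply Rmult_le_pos; nra).
  replace (2 * (q + 1) * (q + 1) * (- d / (q + 1) * d + - d / (q + 1) * (- d / (q + 1)) * q / 2))
    with (- (d * d) * (q + 2)) in Hm by (field; lra).
  assert (Hdd : d * d = 0) by nra.
  apply Rmult_integral in Hdd. unfold d in Hdd. lra.
Qed.

Definition incr (phi : nat -> nat) := forall k, (phi k < phi (S k))%nat.

Lemma incr_ge phi : incr phi -> forall k, (k <= phi k)%nat.
Proof. intros Hp k. induction k. lia. specialize (Hp k). lia. Qed.

Lemma incr_mono phi : incr phi -> forall a b, (a < b)%nat -> (phi a < phi b)%nat.
Proof.
  intros Hp a b Hab. induction b. lia.
  destruct (Nat.eq_dec a b). subst. apply Hp. specialize (Hp b). specialize (IHb ltac:(lia)). lia.
Qed.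

Fixpoint sigF (ext : (nat -> nat) -> nat -> nat -> nat) (m : nat) : nat -> nat :=
  match m with
  | 0 => fun k => k
  | S m' => fun k => sigF ext m' (ext (sigF ext m') m' k)
  end.

Inductive inS (H : Hilbert) (y : nat -> H) : H -> Prop :=
| inS0 : inS H y hzero
| inSy m : inS H y (y m)
| inSadd a b : inS H y a -> inS H y b -> inS H y (hadd a b)
| inSscal t a : inS H y a -> inS H y (hscal t a).

Lemma diag (H : Hilbert) (y : nat -> H) B : (forall n, hnorm (y n) <= B) ->
  exists d, incr d /\ forall m, exists l, Un_cv (fun k => hinner (y (d k)) (y m)) l.
Proof.
  intros Hb.
  set (P := fun sg m phi => incr phi /\ exists l, Un_cv (fun k => hinner (y (sg (phi k))) (y m)) l).
  assert (Ex : forall sg m, exists phi, P sg m phi).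
  { intros sg m. unfold P, incr. apply (BW_sub (fun k => hinner (y (sg k)) (y m)) (B * hnorm (y m))).
    intros n. eapply Rle_trans. apply CS. apply Rmult_le_compat_r. apply hnorm_pos. apply Hb. }
  set (ext := fun sg m => epsilon (inhabits (fun k : nat => k)) (P sg m)).
  assert (Hext : forall sg m, P sg m (ext sg m)) by (intros; apply epsilon_spec, Ex).
  set (sg := sigF ext).
  assert (Isg : forall m, incr (sg m)).
  { induction m; intros k. unfold sg; simpl; lia.
    change (sg m (ext (sg m) m k) < sg m (ext (sg m) m (S k)))%nat. apply incr_mono; auto. apply (Hext (sg m) m). }
  assert (Fac : forall m m', (m <= m')%nat -> exists rho, (forall k, (k <= rho k)%nat) /\
      forall k, sg m' k = sg m (rho k)).
  { intros m m' Hm. induction Hm.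
    - exists (fun k => k). split; auto.
    - destruct IHHm as [rho [Hr1 Hr2]]. exists (fun k => rho (ext (sg m0) m0 k)). split.
      + intros k. specialize (Hr1 (ext (sg m0) m0 k)).
        pose proof (incr_ge _ (proj1 (Hext (sg m0) m0)) k). lia.
      + intros k. simpl. apply Hr2. }
  exists (fun k => sg (S k) k). split.
  - intros k. change (sg (S (S k)) (S k)) with (sg (S k) (ext (sg (S k)) (S k) (S k))).
    apply incr_mono. apply Isg.
    pose proof (incr_ge _ (proj1 (Hext (sg (S k)) (S k))) (S k)). lia.
  - intros m. destruct (proj2 (Hext (sg m) m)) as [l Hl]. exists l.
    intros e He. destruct (Hl e He) as [N HN]. exists (max N (S m)). intros k Hk.
    destruct (Fac (S m) (S k) ltac:(lia)) as [rho [Hr1 Hr2]].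
    rewrite Hr2. apply HN. specialize (Hr1 k). lia.
Qed.

Lemma absb x c : Rabs x <= c -> - c <= x <= c.
Proof. intros. pose proof (Rle_abs x). pose proof (Rle_abs (- x)). rewrite Rabs_Ropp in H1. lra. Qed.
Lemma absb' x c : Rabs x < c -> - c < x < c.
Proof. intros. pose proof (Rle_abs x). pose proof (Rle_abs (- x)). rewrite Rabs_Ropp in H1. lra. Qed.

Lemma weak_compact (H : Hilbert) (y : nat -> H) B : (forall n, hnorm (y n) <= B) ->
  exists (nk : nat -> nat) (g : H), (forall k, (nk k < nk (S k))%nat) /\
    hweak_conv (fun k => y (nk k)) g.
Proof.
  intros Hb. destruct (diag H y B Hb) as [d [Id Cd]].
  assert (Cv : forall v, inS H y v -> exists l, Un_cv (fun k => hinner (y (d k)) v) l).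
  { intros v Hv. induction Hv.
    - exists 0. eapply Un_cv_ext. 2: apply cv_const. intros; simpl. now rewrite ip0r.
    - apply Cd.
    - destruct IHHv1 as [l1 H1], IHHv2 as [l2 H2]. exists (l1 + l2).
      eapply Un_cv_ext. 2: apply (CV_plus _ _ _ _ H1 H2). intros; simpl. now rewrite ipaddr.
    - destruct IHHv as [l1 H1]. exists (t * l1).
      eapply Un_cv_ext. 2: apply (cv_scal _ _ t H1). intros; simpl. now rewrite ipscalr. }
  set (L := fun v => epsilon (inhabits 0) (fun l => Un_cv (fun k => hinner (y (d k)) v) l)).
  assert (HL : forall v, inS H y v -> Un_cv (fun k => hinner (y (d k)) v) (L v)).
  { intros v Hv. unfold L. apply epsilon_spec, Cv, Hv. }
  destruct (rep H (inS H y) L B) as [g [z [Sz [Cz Hg]]]].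
  - constructor.
  - intros; now constructor.
  - intros; now constructor.
  - intros a b Sa Sb. apply (UL_sequence (fun k => hinner (y (d k)) (hadd a b))).
    apply HL; now constructor.
    eapply Un_cv_ext. 2: apply (CV_plus _ _ _ _ (HL a Sa) (HL b Sb)). intros; simpl. now rewrite ipaddr.
  - intros t a Sa. apply (UL_sequence (fun k => hinner (y (d k)) (hscal t a))).
    apply HL; now constructor.
    eapply Un_cv_ext. 2: apply (cv_scal _ _ t (HL a Sa)). intros; simpl. now rewrite ipscalr.
  - intros a Sa. apply (lim_bound _ _ _ (HL a Sa)). intros n.
    eapply Rle_trans. apply CS. apply Rmult_le_compat_r. apply hnorm_pos. apply Hb.
  - exists d, g. split; [exact Id|]. intros u.
    destruct (rep H (inS H y) (fun v => hinner u v) (hnorm u)) as [p [s [Ss [Cs Hp]]]].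
    + constructor.
    + intros; now constructor.
    + intros; now constructor.
    + intros; apply ipaddr.
    + intros; apply ipscalr.
    + intros a _. apply CS.
    + assert (Eq1 : forall k, hinner (y (d k)) u = hinner (y (d k)) p).
      { intros k. rewrite !(hinner_sym _ (y (d k))). symmetry. apply Hp. constructor. }
      assert (Eq2 : hinner g u = hinner g p).
      { apply (UL_sequence (fun j => hinner (z j) u)). apply conv_inner, Cz.
        eapply Un_cv_ext. 2: apply (conv_inner _ z g p Cz). intros j; simpl.
        rewrite !(hinner_sym _ (z j)). apply Hp, Sz. }
      rewrite Eq2. eapply Un_cv_ext. intros k. symmetry. apply Eq1.
      intros e He.
      assert (B0 : 0 <= B) by (pose proof (hnorm_pos _ (y 0%nat)); specialize (Hb 0%nat); lra).
      pose proof (hnorm_pos _ g) as G0.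
      set (Kc := B + hnorm g + 1).
      destruct (Cs (e / (2 * Kc))) as [j Hj]. { unfold Kc. apply Rdiv_lt_0_compat; lra. }
      specialize (Hj j (le_n _)).
      destruct (HL (s j) (Ss j) (e / 2)) as [N HN]. lra.
      exists N. intros k Hk. specialize (HN k Hk). unfold R_dist in *.
      rewrite <- Hg in HN by apply Ss.
      pose proof (CS _ (y (d k)) (hsub (s j) p)) as C1.
      pose proof (CS _ g (hsub (s j) p)) as C2.
      rewrite ipsubr in C1, C2.
      pose proof (hnorm_pos _ (hsub (s j) p)) as N0.
      specialize (Hb (d k)).
      assert (hnorm (y (d k)) * hnorm (hsub (s j) p) <= B * hnorm (hsub (s j) p)) by
        (apply Rmult_le_compat_r; lra).
      assert (Kc * (e / (2 * Kc)) = e / 2) by (unfold Kc; field; lra).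
      assert ((B + hnorm g) * hnorm (hsub (s j) p) <= Kc * (e / (2 * Kc))).
      { unfold Kc in *. nra. }
      apply absb in C1. apply absb in C2. apply absb' in HN.
      apply Rabs_def1; nra.
Qed.

Theorem theorem2 (H : Hilbert) (J : functional H)
  (HJp : proper J) (HJc : convex J) (HJl : lsc J)
  (HJh : abs_one_homogeneous J) (HJP : poincare J)
  (f : H) (Hf : in_null_perp J f) (fs ps : nat -> H)
  (HS : scheme_S J f fs ps) :
  (forall n, hnorm (fs n) <= hnorm f) /\
  exists (nk : nat -> nat) (g : H),
    (forall k, (nk k < nk (S k))%nat) /\
    hweak_conv (fun k => fs (nk k)) g.
Proof.
  destruct HS as [H0 [Hz Hstep]].
  assert (Dec : forall n, hinner (fs (S n)) (fs (S n)) <= hinner (fs n) (fs n)).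
  { intros n. destruct (classic (fs n = hzero)) as [E|E].
    - rewrite (Hz n E), E. lra.
    - destruct (Hstep n E) as [_ ->]. apply step_norm. }
  assert (Bd : forall n, hnorm (fs n) <= hnorm f).
  { intros n. unfold hnorm. apply sqrt_le_1_alt. induction n.
    - rewrite H0. lra.
    - specialize (Dec n). lra. }
  split; [exact Bd|]. apply (weak_compact H fs (hnorm f) Bd).
Qed.
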